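(* Let $G$ be a graph. Then $\chi_{alg}(G)=1$ if and only if $G$ is the empty graph (has no edges). Hence $\chi_{alg}(G)=1\iff\chi(G)=1$.
   Context: Graphs are finite, loopless, with symmetric edge sets; $K_c$ is the complete graph on $c$ vertices; $\chi(G)$ is the usual chromatic number. For $|I|=n$, $|O|=m$ ($O=\{0,\dots,m-1\}$), $\mathbb F(n,m)$ is the free product of $n$ copies of the cyclic group of order $m$ with generators $u_v$, $\mathbb C[\mathbb F(n,m)]$ its group $*$-algebra, $\omega=e^{2\pi i/m}$, $e_{v,a}=\frac1m\sum_{k=0}^{m-1}(\omega^{-a}u_v)^k$. For graphs $G,H$, the graph homomorphism game has $I=V(G)$, $O=V(H)$, $\lambda(v,w,a,b)=0$ iff ($v=w$, $a\ne b$) or ($(v,w)\in E(G)$, $(a,b)\notin E(H)$); $\mathcal I(G,H)$ is the two-sided $*$-ideal generated by $\{e_{v,a}e_{w,b}:\lambda(v,w,a,b)=0\}$, $\mathcal A(G,H)$ the quotient, and $\chi_{alg}(G)=\min\{c:\mathcal A(G,K_c)\ne0\}$. *)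

(* Defs.v *)
From mathcomp Require Import all_boot all_algebra.
From mathcomp Require Import Rstruct.
From mathcomp.real_closed Require Import complex.
From Stdlib Require Import Reals.

Set Implicit Arguments.
Unset Strict Implicit.
Unset Printing Implicit Defensive.
Import GRing.Theory.
Local Open Scope ring_scope.

Definition CC : Type := complex R.

Definition omega (m : nat) : CC :=
  Complex (cos (2 * PI / INR m)%R) (sin (2 * PI / INR m)%R).

(* Free associative unital C-algebra C<x_v : v in I>, elements given as
   formal finite sums of (coefficient, word) pairs; two formal sums
   represent the same element iff all their coefficients agree.       *)
Section FreeAlg.
Variable I : finType.

Definition fpoly : Type := seq (CC * seq I).

Definition fcoef (p : fpoly) (w : seq I) : CC :=
  \sum_(t <- p | t.2 == w) t.1.

Definition feq (p q : fpoly) : Prop := forall w, fcoef p w = fcoef q w.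

Definition fadd (p q : fpoly) : fpoly := p ++ q.
Definition fscale (c : CC) (p : fpoly) : fpoly := [seq (c * t.1, t.2) | t <- p].
Definition fmul (p q : fpoly) : fpoly :=
  [seq (a.1 * b.1, a.2 ++ b.2) | a <- p, b <- q].
Definition fone : fpoly := [:: (1, [::])].
Definition fgen (v : I) : fpoly := [:: (1, [:: v])].
Definition fpow (p : fpoly) (k : nat) : fpoly := iter k (fmul p) fone.
Definition fsum (ps : seq fpoly) : fpoly := flatten ps.

Definition in_ideal (S : fpoly -> Prop) (p : fpoly) : Prop :=
  exists ts : seq (fpoly * fpoly * fpoly),
    (forall t, List.In t ts -> S t.1.2) /\
    feq p (fsum [seq fmul (fmul t.1.1 t.1.2) t.2 | t <- ts]).

End FreeAlg.

(* C[F(n,m)], F(n,m) = free product of n copies of Z/m, presented as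
   C<u_v> / (u_v^m - 1).  Generators u_v := fgen v.                   *)

Definition e_proj (I : finType) (m : nat) (v : I) (a : nat) : fpoly I :=
  fsum [seq fscale ((m%:R)^-1 * ((omega m)^-1) ^+ (a * k)) (fpow (fgen v) k)
       | k <- iota 0 m].

(* Graph homomorphism game G -> K_c: lambda(v,w,a,b) = 0 iff
   (v = w and a <> b) or ((v,w) in E(G) and (a,b) notin E(K_c)),
   where (a,b) in E(K_c) iff a <> b. *)
Definition lambda0 (V : finType) (E : rel V) (c : nat)
    (v w : V) (a b : 'I_c) : bool :=
  ((v == w) && (a != b)) || (E v w && ~~ (a != b)).

(* Generators of I(G,K_c) together with the group relations u_v^c = 1
   of C[F(n,c)]; A(G,K_c) is the free algebra modulo the ideal they generate. *)
Definition rels (V : finType) (E : rel V) (c : nat) (p : fpoly V) : Prop :=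
  (exists v : V, p = fadd (fpow (fgen v) c) (fscale (-1) (fone V))) \/
  (exists (v w : V) (a b : 'I_c),
      lambda0 E v w a b /\ p = fmul (e_proj c v a) (e_proj c w b)).

(* A(G,K_c) <> 0  iff  1 is not in the ideal. *)
Definition A_nonzero (V : finType) (E : rel V) (c : nat) : Prop :=
  ~ in_ideal (rels E c) (fone V).

(* chi_alg(G) = c, with c ranging over c >= 1 (K_c needs c >= 1). *)
Definition is_chi_alg (V : finType) (E : rel V) (c : nat) : Prop :=
  (0 < c)%nat /\ A_nonzero E c /\
  (forall c' : nat, (0 < c')%nat -> (c' < c)%nat -> ~ A_nonzero E c').

Definition proper_coloring (V : finType) (E : rel V) (c : nat) (f : V -> 'I_c) : Prop :=
  forall x y, E x y -> f x != f y.

Definition is_chromatic (V : finType) (E : rel V) (c : nat) : Prop :=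
  (exists f : V -> 'I_c, proper_coloring E f) /\
  (forall c' : nat, (c' < c)%nat -> ~ exists f : V -> 'I_c', proper_coloring E f).

(* Main.v *)
Require Import Defs.
From mathcomp Require Import all_boot all_algebra.
From mathcomp Require Import Rstruct.
From mathcomp.real_closed Require Import complex.
Import GRing.Theory.
Local Open Scope ring_scope.
Set Implicit Arguments.
Unset Strict Implicit.

Section Eval.
Variable I : finType.
Definition ev (p : fpoly I) : CC := \sum_(t <- p) t.1.

Lemma ev_coef p s : uniq s -> {subset map snd p <= s} ->
  ev p = \sum_(w <- s) fcoef p w.
Proof.
move=> us sub; rewrite /fcoef.
under eq_bigr do rewrite big_mkcond.
rewrite exchange_big /ev; apply: eq_big_seq => t tp /=.
rewrite -big_mkcond big_const_seq /=.
have -> : count (fun w => t.2 == w) s = count_mem t.2 s.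
  by apply: eq_count => w /=; rewrite eq_sym.
rewrite count_uniq_mem // (sub t.2) //; last by apply: map_f.
by rewrite /= addr0.
Qed.

Lemma ev_feq p q : feq p q -> ev p = ev q.
Proof.
move=> e; set s := undup (map snd (p ++ q)).
have us : uniq s by apply: undup_uniq.
rewrite (ev_coef (p:=p) us) ?(ev_coef (p:=q) us) //.
- by apply: eq_bigr => w _; rewrite e.
- by move=> x xq; rewrite mem_undup map_cat mem_cat xq orbT.
- by move=> x xp; rewrite mem_undup map_cat mem_cat xp.
Qed.

Lemma ev_add p q : ev (fadd p q) = ev p + ev q.
Proof. by rewrite /ev /fadd big_cat. Qed.

Lemma ev_scale c p : ev (fscale c p) = c * ev p.
Proof. by rewrite /ev /fscale big_map mulr_sumr. Qed.

Lemma ev_mul p q : ev (fmul p q) = ev p * ev q.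
Proof.
rewrite /ev /fmul big_allpairs_dep /= mulr_suml.
by apply: eq_bigr => a _; rewrite mulr_sumr.
Qed.

Lemma ev_one : ev (fone I) = 1.
Proof. by rewrite /ev big_cons big_nil addr0. Qed.

Lemma ev_gen v : ev (fgen v) = 1.
Proof. by rewrite /ev big_cons big_nil addr0. Qed.

Lemma ev_pow p k : ev (fpow p k) = ev p ^+ k.
Proof.
elim: k => [|k IH]; first by rewrite ev_one expr0.
by rewrite /fpow iterS -/(fpow p k) ev_mul IH exprS.
Qed.

Lemma ev_sum ps : ev (fsum ps) = \sum_(p <- ps) ev p.
Proof.
elim: ps => [|p ps IH]; first by rewrite /ev /fsum big_nil big_nil.
by rewrite /fsum /= -/(fsum ps) -/(fadd p _) ev_add IH big_cons.
Qed.
End Eval.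
Lemma edge_kill (V : finType) (E : rel V) v w : E v w -> in_ideal (rels E 1) (fone V).
Proof.
move=> Evw.
exists [:: (fone V, fmul (e_proj 1 v (@ord0 0)) (e_proj 1 w (@ord0 0)), fone V)]; split.
  move=> t [<-|[]] /=; right; exists v, w, (@ord0 0), (@ord0 0); split=> //.
  by rewrite /lambda0 Evw eqxx orbT.
move=> u; rewrite /fcoef /= !big_cons !big_nil /=.
case: eqP => // _.
by rewrite expr0 invr1 !mulr1.
Qed.

Lemma ideal_sum0 (V : finType) (E : rel V) (ts : seq (fpoly V * fpoly V * fpoly V)) :
  (forall x y, ~~ E x y) ->
  (forall t, List.In t ts -> rels E 1 t.1.2) ->
  ev (fsum [seq fmul (fmul t.1.1 t.1.2) t.2 | t <- ts]) = 0.
Proof.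
move=> noE; elim: ts => [|t ts IH] H; first by rewrite /ev /fsum big_nil.
rewrite /= /fsum /= -/(fsum _) -/(fadd _ _) ev_add IH; last by move=> u iu; apply: H; right.
rewrite !ev_mul addr0.
have [[v ->]|[v [w [a [b [lam _]]]]]] := H t (or_introl erefl).
  by rewrite ev_add ev_scale ev_pow ev_gen ev_one expr1 mulr1 subrr !mulr0 mul0r.
exfalso; move: lam; rewrite /lambda0.
have -> : a = b by apply: val_inj; case: a => [[|?] ?]; case: b => [[|?] ?].
by rewrite eqxx andbF /= andbT (negbTE (noE v w)).
Qed.

Lemma key (V : finType) (E : rel V) : A_nonzero E 1 <-> (forall x y : V, ~~ E x y).
Proof.
split.
  move=> HA x y; apply/negP => Exy; apply: HA; exact: edge_kill Exy.
move=> noE [ts [Hts Hf]].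
have := ev_feq Hf; rewrite ev_one (ideal_sum0 noE Hts).
by move/eqP; rewrite oner_eq0.
Qed.

Theorem mainTheorem15 (V : finType) (E : rel V)
    (Esym : symmetric E) (Eirr : irreflexive E) :
  (is_chi_alg E 1 <-> (forall x y : V, ~~ E x y)) /\
  ((0 < #|V|)%nat -> (is_chi_alg E 1 <-> is_chromatic E 1)).
Proof.
have chi : is_chi_alg E 1 <-> (forall x y : V, ~~ E x y).
  rewrite -key; split; first by case=> _ [].
  move=> HA; split=> //; split=> // c' c1 c2.
  by move: c1 c2; case: c'.
split=> // Vn; rewrite chi.
have [x0 _] : exists x : V, x \in V by apply/card_gt0P.
split.
  move=> noE; split.
    by exists (fun _ => @ord0 0) => x y; rewrite (negbTE (noE x y)).
  move=> [|c'] // _ [f _]; by case: (f x0).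
move=> [[f pf] _] x y; apply/negP => Exy.
have := pf x y Exy.
have -> : f x = f y by apply: val_inj; case: (f x) => [[|?] ?]; case: (f y) => [[|?] ?].
by rewrite eqxx.
Qed.
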